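(* Let $p\ge0$, $q\ge1$, $\mathbf{k}=(k_1,\dots,k_r)$ with $k_i\ge1$, and let $Z\in\tilde V_{\mathbf{k}}(\mathbb{R}^{p,q})$ (if $q=1$, let $Z$ lie in the component $\tilde V_{\mathbf{k}}(\mathbb{R}^{p,1})_\Sigma$ for a fixed $\Sigma\in\prod_i\mathfrak{S}_{k_i}$). Then there is a unique ray partition $Q^Z$ of type $\mathbf{k}$ which is witnessed by $Z$ and has maximal weight among all ray partitions of type $\mathbf{k}$ witnessed by $Z$. If $q=1$, moreover $\Sigma(Q^Z)=\Sigma$.
   Context: $d=p+q$; points of $\mathbb{R}^d$ are written $(\zeta,t)\in\mathbb{R}^{d-1}\times\mathbb{R}$, with projections $\mathrm{pr}_\zeta$, $\mathrm{pr}_t$; $\mathrm{pr}_1:\mathbb{R}^d\to\mathbb{R}^p$ is the projection to the first $p$ coordinates. $\tilde V_{\mathbf{k}}(\mathbb{R}^{p,q})\subseteq\prod_i(\mathbb{R}^d)^{k_i}$ consists of tuples $Z=(z_i^j)$ of pairwise distinct points with $\mathrm{pr}_1(z_i^1)=\dots=\mathrm{pr}_1(z_i^{k_i})$ for each $i$. For $q=1$ and $\Sigma=(\sigma_i)$, $\tilde V_{\mathbf{k}}(\mathbb{R}^{p,1})_\Sigma$ is the set of such $Z$ with $\mathrm{pr}_t(z_i^{\sigma_i(j)})<\mathrm{pr}_t(z_i^{\sigma_i(j+1)})$ for all $i$, $j$. Table $T_{\mathbf{k}}=\{(i,j):1\le i\le r,1\le j\le k_i\}$ with lexicographic order $<$.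 A ray partition $Q$ of type $\mathbf{k}$: a partition of $T_{\mathbf{k}}$ into nonempty pieces $Q_1,\dots,Q_l$, each with a total order $\prec_\beta$, with $\min(Q_1,<)<\dots<\min(Q_l,<)$ and $\min(Q_\beta,\prec_\beta)=\min(Q_\beta,<)$ for all $\beta$. $Q$ is witnessed by $Z$ if (W1) for each $\beta$, all $z_i^j$ with $(i,j)\in Q_\beta$ have the same image under $\mathrm{pr}_\zeta$, and (W2) $(i,j)\prec_\beta(i',j')$ implies $\mathrm{pr}_t(z_i^j)<\mathrm{pr}_t(z_{i'}^{j'})$. The weight of $Q$ is $\omega(Q)=(|Q_1|,\dots,|Q_l|)$, an element of the set $\mathbb{P}(\mathbf{k})$ of sequences of positive integers summing to $|\mathbf{k}|$; these are compared lexicographically after padding with zeros to length $|\mathbf{k}|$. For $q=1$, $\Sigma(Q)=(\sigma_1,\dots,\sigma_r)$ is defined via the stacked total order $\prec$ on $T_{\mathbf{k}}$ (restricting to $\prec_\beta$ on $Q_\beta$, with all elements of $Q_{\beta+1}$ smaller than those of $Q_\beta$): $\sigma_i$ is the unique permutation with $(i,\sigma_i(j))\prec(i,\sigma_i(j+1))$ for all $j$. *)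

(* Defs.v *)
From HB Require Import structures.
From mathcomp Require Import all_boot all_order all_algebra all_fingroup.
From mathcomp Require Import reals.
Set Implicit Arguments. Unset Strict Implicit. Unset Printing Implicit Defensive.
Import Order.TTheory GRing.Theory Num.Theory.
Local Open Scope ring_scope.

(* Points of R^n are row vectors 'rV[R]_n, coordinates are
   0-based: coordinate l of x is x 0 l.  The table T_k is the finite type
   {i : 'I_r & 'I_(k i)} (both indices 0-based). *)

Section Defs.
Variable R : realType.

Definition coord n (x : 'rV[R]_n) (l : nat) : R :=
  if insub l is Some o then x 0 o else 0.

Definition pr_t n (x : 'rV[R]_n) : R := coord x n.-1.
Definition pr_zeta n (x : 'rV[R]_n) : 'rV[R]_(n.-1) := \row_(l < n.-1) coord x l.
Definition pr_1 p n (x : 'rV[R]_n) : 'rV[R]_p := \row_(l < p) coord x l.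

Variables (r : nat) (k : 'I_r -> nat).
Local Notation T := {i : 'I_r & 'I_(k i)}.
Local Notation ij i j := (@Tagged 'I_r i (fun i => 'I_(k i)) j).

Definition tlt (a b : T) : bool :=
  (tag a < tag b)%N || ((tag a == tag b) && (tagged a < tagged b)%N).

Definition in_Vtilde p q (Z : T -> 'rV[R]_(p + q)) : Prop :=
  injective Z /\
  forall (i : 'I_r) (j j' : 'I_(k i)), pr_1 p (Z (ij i j)) = pr_1 p (Z (ij i j')).

(* A ray partition Q_1,...,Q_l is encoded as the list [:: Q_1; ...; Q_l],
   each piece Q_beta being the list of its elements in increasing
   prec_beta order. *)
Definition is_ray_partition (Q : seq (seq T)) : Prop :=
  [/\ perm_eq (flatten Q) (enum {: T}),
      all (fun s => s != [::]) Q,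
      all (fun s => if s is x :: s' then all (tlt x) s' else true) Q
                                   (* min(Q_b, prec_b) = min(Q_b, <) *) &
      sorted tlt (pmap ohead Q)].  (* min(Q_1,<) < ... < min(Q_l,<) *)

Definition witnessed p q (Z : T -> 'rV[R]_(p + q)) (Q : seq (seq T)) : Prop :=
  forall s, s \in Q ->
    (forall x y, x \in s -> y \in s -> pr_zeta (Z x) = pr_zeta (Z y)) /\
    pairwise (fun x y => pr_t (Z x) < pr_t (Z y)) s.

Definition weight (Q : seq (seq T)) : seq nat := map size Q.

Fixpoint lex_le (s t : seq nat) : bool :=
  match s, t with
  | [::], _ => true
  | _ :: _, [::] => false
  | a :: s', b :: t' => (a < b)%N || ((a == b) && lex_le s' t')
  end.

Definition pad (N : nat) (w : seq nat) : seq nat := w ++ nseq (N - size w) 0%N.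

Definition weight_le (w1 w2 : seq nat) : bool :=
  lex_le (pad (\sum_(i < r) k i) w1) (pad (\sum_(i < r) k i) w2).

Definition max_witnessed p q (Z : T -> 'rV[R]_(p + q)) (Q : seq (seq T)) : Prop :=
  [/\ is_ray_partition Q, witnessed Z Q &
      forall Q', is_ray_partition Q' -> witnessed Z Q' ->
        weight_le (weight Q') (weight Q)].

Definition in_component p q (Z : T -> 'rV[R]_(p + q))
    (Sg : forall i : 'I_r, {perm 'I_(k i)}) : Prop :=
  forall (i : 'I_r) (j j' : 'I_(k i)), j.+1 = j' :> nat ->
    pr_t (Z (ij i (Sg i j))) < pr_t (Z (ij i (Sg i j'))).

(* stacked total order: list of T in increasing prec order is Q_l ++ ... ++ Q_1 *)
Definition stacked_lt (Q : seq (seq T)) (x y : T) : bool :=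
  (index x (flatten (rev Q)) < index y (flatten (rev Q)))%N.

(* Sigma(Q) = Sg : each sigma_i is the (unique) permutation with
   (i, sigma_i(j)) prec (i, sigma_i(j+1)) for all j *)
Definition Sigma_of_eq (Q : seq (seq T)) (Sg : forall i : 'I_r, {perm 'I_(k i)}) : Prop :=
  forall (i : 'I_r) (j j' : 'I_(k i)), j.+1 = j' :> nat ->
    stacked_lt Q (ij i (Sg i j)) (ij i (Sg i j')).

End Defs.

(* Main.v *)
From HB Require Import structures.
From mathcomp Require Import all_boot all_order all_algebra all_fingroup.
From mathcomp Require Import reals.
Require Import Defs.
From mathcomp Require Import zify.
Set Implicit Arguments. Unset Strict Implicit. Unset Printing Implicit Defensive.
Import Order.TTheory GRing.Theory Num.Theory.
Local Open Scope ring_scope.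



Lemma pad_cons N a w : pad N (a :: w) = a :: pad N.-1 w.
Proof. by rewrite /pad /=; case: N => [|N] //=; rewrite subSS. Qed.

Lemma subnSp N x : (N - x.+1 = N.-1 - x)%N.
Proof. by case: N => [|N]; rewrite ?sub0n ?subSS. Qed.

Lemma lex_refl s : lex_le s s.
Proof. by elim: s => //= a s ->; rewrite eqxx orbT. Qed.

Lemma lex_anti s u : lex_le s u -> lex_le u s -> s = u.
Proof.
elim: s u => [|a s IH] [|b u] //= h1 h2.
case/orP: h1 => [hab|/andP[/eqP eab h1]].
  case/orP: h2 => [hba|/andP[/eqP eba _]].
    by have := ltn_trans hab hba; rewrite ltnn.
  by rewrite eba ltnn in hab.
subst b; case/orP: h2 => [|/andP[_ h2]]; first by rewrite ltnn.
by rewrite (IH u h1 h2).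
Qed.

Lemma pad_inj N w1 w2 : all (fun n => 0 < n)%N w1 -> all (fun n => 0 < n)%N w2 ->
  pad N w1 = pad N w2 -> w1 = w2.
Proof.
elim: w1 w2 N => [|a w1 IH] [|b w2] N //=.
- move=> _ /andP[hb _]; rewrite pad_cons /pad /= subn0.
  case: N => [|N] //= e; have := congr1 (head 0%N) e => /= e'; by rewrite -e' in hb.
- move=> /andP[ha _] _; rewrite pad_cons /pad /= subn0.
  case: N => [|N] //= e; have := congr1 (head 0%N) e => /= e'; by rewrite e' in ha.
move=> /andP[_ h1] /andP[_ h2]; rewrite !pad_cons => -[-> e].
by rewrite (IH w2 N.-1).
Qed.

Section G.
Variables (T : eqType) (lt : rel T) (V : eqType) (R : realType) (zeta : T -> V) (t : T -> R).
Hypotheses (lt_irr : irreflexive lt) (lt_tr : transitive lt)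
 (zt_inj : forall x y, zeta x = zeta y -> t x = t y -> x = y).

Definition let_ := fun x y : T => t x <= t y.
Definition cond (m y : T) := (zeta y == zeta m) && (t m < t y).

Fixpoint greedy (n : nat) (s : seq T) : seq (seq T) :=
  match n, s with
  | n'.+1, m :: s' => (m :: sort let_ [seq y <- s' | cond m y])
                        :: greedy n' [seq y <- s' | ~~ cond m y]
  | _, _ => [::]
  end.

Lemma pw_strict s : pairwise let_ s -> uniq s ->
  {in s &, forall x y, zeta x = zeta y} -> pairwise (fun x y => t x < t y) s.
Proof.
elim: s => //= a s IH /andP[ha hs] /andP[nas us] hz.
apply/andP; split; last first.
  by apply: IH => // x y xs ys; apply: hz; rewrite inE ?xs ?ys orbT.
apply/allP => y ys; have := allP ha y ys; rewrite /let_ le_eqVlt => /orP[/eqP e|//].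
have ya : y \in a :: s by rewrite inE ys orbT.
have ez := hz a y (mem_head _ _) ya.
by move: nas; rewrite (zt_inj ez e) ys.
Qed.

Lemma sort_pw m B : all (cond m) B -> uniq B ->
  pairwise (fun x y => t x < t y) (sort let_ B).
Proof.
move=> hB uB; apply: pw_strict.
- rewrite -sorted_pairwise; last by move=> y x z h1 h2; exact: le_trans h1 h2.
  by apply: sort_sorted => x y; exact: le_total.
- by rewrite sort_uniq.
- move=> x y; rewrite !mem_sort => xB yB.
  have /andP[/eqP-> _] := allP hB x xB; by have /andP[/eqP-> _] := allP hB y yB.
Qed.

Lemma idx_pw s x y : pairwise (fun x y => t x < t y) s -> x \in s -> y \in s ->
  t x < t y -> (index x s < index y s)%N.
Proof.
elim: s => //= a s IH /andP[ha hs]; rewrite !inE => xs ys txy.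
case: (eqVneq a x) => [ax|nax].
  subst x; case: (eqVneq a y) => [ay|//]; by subst y; rewrite ltxx in txy.
move: xs; rewrite eq_sym (negbTE nax) /= => xs.
case: (eqVneq a y) => [ay|nay].
  subst y; have := allP ha x xs => h1.
  by have := lt_trans h1 txy; rewrite ltxx.
move: ys; rewrite eq_sym (negbTE nay) /= => ys.
by rewrite ltnS; apply: IH.
Qed.

Definition is_rp (S : seq T) (Q : seq (seq T)) : Prop :=
  [/\ perm_eq (flatten Q) S, all (fun s => s != [::]) Q,
      all (fun s => if s is x :: s' then all (lt x) s' else true) Q &
      sorted lt (pmap ohead Q)].

Definition wit (Q : seq (seq T)) : Prop :=
  forall s, s \in Q ->
    (forall x y, x \in s -> y \in s -> zeta x = zeta y) /\
    pairwise (fun x y => t x < t y) s.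

Lemma head_flat (Q : seq (seq T)) h : h \in pmap ohead Q -> h \in flatten Q.
Proof.
rewrite mem_pmap => /mapP[s sQ]; case: s sQ => //= a s sQ [->].
by apply/flattenP; exists (a :: s) => //; exact: mem_head.
Qed.


Lemma greedy_rp n S : (size S <= n)%N -> sorted lt S ->
  is_rp S (greedy n S) /\ wit (greedy n S).
Proof.
elim: n S => [|n IH] [|m S'] //=; try by move=> _ _; split; [split => //| move=> s].
rewrite ltnS => hsz hpath.
set B := [seq y <- S' | cond m y]; set C := [seq y <- S' | ~~ cond m y].
have hBC : perm_eq (B ++ C) S'.
  by have := perm_filterC (cond m) S'; move/(_ S'); rewrite perm_refl.
have sS' : sorted lt S' := path_sorted hpath.
have mS' : all (lt m) S' := order_path_min lt_tr hpath.
have uS : uniq (m :: S') := @sorted_uniq _ _ lt_tr lt_irr (m :: S') hpath.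
have sC : sorted lt C := sorted_filter lt_tr _ sS'.
have szC : (size C <= n)%N by rewrite size_filter (leq_trans (count_size _ _) hsz).
have [[hp hne hmin hs] hw] := IH C szC sC.
split.
  split => /=.
  - rewrite perm_cons; apply: perm_trans hBC; apply: perm_cat => //.
    by rewrite perm_sort.
  - exact: hne.
  - rewrite hmin andbT all_sort; apply/allP => y; rewrite mem_filter => /andP[_ yS].
    exact: (allP mS' y yS).
  - rewrite path_min_sorted //; apply/allP => h /head_flat.
    rewrite (perm_mem hp) mem_filter => /andP[_ hS]; exact: (allP mS' h hS).
move=> s; rewrite inE => /orP[/eqP->|sG]; last exact: hw.
split.
  have hz : forall x, x \in m :: sort let_ B -> zeta x = zeta m.
    move=> x; rewrite inE mem_sort mem_filter => /orP[/eqP->//|/andP[/andP[/eqP-> _] _]].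
    by [].
  by move=> x y /hz-> /hz->.
rewrite /=; apply/andP; split.
  by rewrite all_sort; apply/allP => y; rewrite mem_filter => /andP[/andP[_ ->] _].
apply: (sort_pw (m := m)); first exact: filter_all.
by rewrite filter_uniq //; case/andP: uS.
Qed.

Lemma greedy_max n S : (size S <= n)%N -> sorted lt S ->
  forall Q, is_rp S Q -> wit Q ->
  (forall N, lex_le (pad N (map size Q)) (pad N (map size (greedy n S)))) /\
  (map size Q = map size (greedy n S) -> Q = greedy n S).
Proof.
elim: n S => [|n IH] [|m S'] //=; try by [].
- move=> _ _ Q [hp hne _ _] _.
  have -> : Q = [::].
    case: Q hp hne => [//|[|a s] Q'] //= hp; by have := perm_size hp.
  by split => // N; exact: lex_refl.
- move=> _ _ Q [hp hne _ _] _.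
  have -> : Q = [::].
    case: Q hp hne => [//|[|a s] Q'] //= hp; by have := perm_size hp.
  by split => // N; exact: lex_refl.
rewrite ltnS => hsz hpath Q [hp hne hmin hs] hw.
set B := [seq y <- S' | cond m y]; set C := [seq y <- S' | ~~ cond m y].
have hBC : perm_eq (B ++ C) S'.
  by have := perm_filterC (cond m) S'; move/(_ S'); rewrite perm_refl.
have sS' : sorted lt S' := path_sorted hpath.
have mS' : all (lt m) S' := order_path_min lt_tr hpath.
have uS : uniq (m :: S') := @sorted_uniq _ _ lt_tr lt_irr (m :: S') hpath.
have sC : sorted lt C := sorted_filter lt_tr _ sS'.
have szC : (size C <= n)%N by rewrite size_filter (leq_trans (count_size _ _) hsz).
case: Q hp hne hmin hs hw => [|[|m0 s1] Qr].
- by move/perm_size.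
- by [].
move=> /= hp hne /andP[hm0 hmin] hs hw.
have [hz1 /andP[hts1 hpws1]] := hw (m0 :: s1) (mem_head _ _).
have em : m0 = m.
  apply/eqP; apply: contraT => nm.
  have : m0 \in m :: S' by rewrite -(perm_mem hp) mem_head.
  rewrite inE (negbTE nm) /= => m0S.
  have l1 : lt m m0 := allP mS' _ m0S.
  have : m \in m0 :: s1 ++ flatten Qr by rewrite (perm_mem hp) mem_head.
  rewrite inE eq_sym (negbTE nm) mem_cat /= => /orP[ms1|/flattenP[sj sjQ msj]].
    by have := lt_tr l1 (allP hm0 _ ms1); rewrite lt_irr.
  case: sj sjQ msj => [|h sj] sjQ //.
  have hh : h \in pmap ohead Qr by rewrite mem_pmap; apply/mapP; exists (h :: sj).
  have l2 : lt m0 h := allP (order_path_min lt_tr hs) h hh.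
  have hmj := allP hmin _ sjQ.
  rewrite inE => /orP[/eqP e|msj].
    by subst h; have := lt_tr l1 l2; rewrite lt_irr.
  have l3 : lt h m := allP hmj m msj.
  by have := lt_tr l1 (lt_tr l2 l3); rewrite lt_irr.
subst m0.
have uQ : uniq (m :: s1 ++ flatten Qr) by rewrite (perm_uniq hp).
have us1 : uniq s1 by move: uQ; rewrite cons_uniq cat_uniq => /andP[_ /and3P[]].
have sub : {subset s1 <= B}.
  move=> y ys1; rewrite mem_filter; apply/andP; split.
    by rewrite /cond (hz1 y m) ?mem_head ?inE ?ys1 ?orbT // eqxx (allP hts1 y ys1).
  have : y \in m :: S' by rewrite -(perm_mem hp) inE mem_cat ys1 orbT.
  rewrite inE => /orP[/eqP e|//].
  by subst y; have := allP hm0 m ys1; rewrite lt_irr.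
have uB : uniq B := filter_uniq _ (andP uS).2.
have hle := uniq_leq_size us1 sub.
rewrite size_sort.
case: (ltngtP (size s1) (size B)) => [hlt|hgt|heq].
- split; first by move=> N; rewrite ltnS hlt.
  by move=> [e _]; rewrite e ltnn in hlt.
- by rewrite ltnNge hle in hgt.
have [_ eqs] := uniq_min_size us1 sub (eq_leq (esym heq)).
have ps : perm_eq s1 B := uniq_perm us1 uB eqs.
have pF : perm_eq (flatten Qr) C.
  move: hp; rewrite perm_cons => hp'.
  rewrite -(perm_cat2l B); apply: (@perm_trans _ S'); last by rewrite perm_sym.
  apply: (@perm_trans _ (s1 ++ flatten Qr)) => //.
  by apply: perm_cat => //; rewrite perm_sym.
have rpQr : is_rp C Qr by split => //; exact: path_sorted hs.
have wQr : wit Qr by move=> s sQ; apply: hw; rewrite inE sQ orbT.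
have [IH1 IH2] := IH C szC sC Qr rpQr wQr.
split.
  by move=> N; rewrite heq ltnn eqxx /= !subnSp; exact: (IH1 N.-1).
move=> [_ e]; rewrite (IH2 e); congr ((m :: _) :: _).
apply: (@sorted_eq _ (fun x y => t x < t y)).
- by move=> ? ? ?; exact: lt_trans.
- by move=> x y /andP[h1 h2]; have := lt_trans h1 h2; rewrite ltxx.
- exact: pairwise_sorted hpws1.
- apply: pairwise_sorted; apply: (sort_pw (m := m)); first exact: filter_all.
  exact: uB.
by rewrite perm_sym perm_sort perm_sym.
Qed.

Lemma mem_flat_rev (Q : seq (seq T)) x : (x \in flatten (rev Q)) = (x \in flatten Q).
Proof. by apply/flattenP/flattenP => -[s sQ xs]; exists s => //; move: sQ; rewrite mem_rev. Qed.

Lemma greedy_stack n S : (size S <= n)%N -> sorted lt S ->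
  forall x y, x \in S -> y \in S -> zeta x = zeta y -> t x < t y ->
  (index x (flatten (rev (greedy n S))) < index y (flatten (rev (greedy n S))))%N.
Proof.
move=> hsz0 hpath0; have [_ hwG] := greedy_rp hsz0 hpath0.
elim: n S hsz0 hpath0 hwG => [|n IH] [|m S'] //=.
move=> hsz0 hpath hwG x y xS yS ezy txy.
have hsz : (size S' <= n)%N by [].
set B := [seq y <- S' | cond m y]; set C := [seq y <- S' | ~~ cond m y].
have sS' : sorted lt S' := path_sorted hpath.
have sC : sorted lt C := sorted_filter lt_tr _ sS'.
have szC : (size C <= n)%N by rewrite size_filter (leq_trans (count_size _ _) hsz).
have [[hp _ _ _] hwC] := greedy_rp szC sC.
rewrite rev_cons flatten_rcons !index_cat !mem_flat_rev !(perm_mem hp).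
set P := m :: sort let_ B.
have memP : forall z, z \in m :: S' -> z \notin C -> z \in P.
  move=> z; rewrite inE => /orP[/eqP->|zS]; first by rewrite mem_head.
  rewrite mem_filter zS andbT negbK => hc; by rewrite inE mem_sort mem_filter hc zS orbT.
have inP : forall z, z \in P -> z = m \/ cond m z.
  move=> z; rewrite inE mem_sort mem_filter => /orP[/eqP->|/andP[-> _]]; by [left|right].
case xC: (x \in C); case yC: (y \in C).
- exact: (IH C szC sC hwC x y xC yC ezy txy).
- by apply: ltn_addr; rewrite index_mem mem_flat_rev (perm_mem hp) xC.
- exfalso; have xP := memP x xS (negbT xC).
  move: yC; rewrite mem_filter => /andP[ncy _]; apply: (negP ncy); rewrite /cond.
  case: (inP x xP) => [e|/andP[/eqP ex tmx]].
    by subst x; rewrite ezy eqxx txy.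
  by rewrite -ezy ex eqxx (lt_trans tmx txy).
rewrite ltn_add2l; apply: idx_pw => //.
- by have [_ ] := hwG P (mem_head _ _).
- exact: memP x xS (negbT xC).
- exact: memP y yS (negbT yC).
Qed.

End G.

Section Top.
Variables (r : nat) (k : 'I_r -> nat).
Local Notation TT := {i : 'I_r & 'I_(k i)}.

Lemma tlt_irr : irreflexive (@tlt r k).
Proof. by move=> a; rewrite /tlt ltnn eqxx ltnn. Qed.

Lemma tlt_tr : transitive (@tlt r k).
Proof.
move=> b a c; rewrite /tlt.
case/orP => [h1|/andP[/eqP e1 h1]]; case/orP => [h2|/andP[/eqP e2 h2]].
- by rewrite (ltn_trans h1 h2).
- by apply/orP; left; rewrite -(congr1 val e2).
- by apply/orP; left; rewrite (congr1 val e1).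
- apply/orP; right; apply/andP; split; first by rewrite e1 e2.
  exact: ltn_trans h1 h2.
Qed.

Definition tle (a b : TT) := (a == b) || tlt a b.

Lemma tle_total : total tle.
Proof.
move=> [i x] [j y]; rewrite /tle /tlt /=.
case: (ltngtP (nat_of_ord i) (nat_of_ord j)) => [h|h|h]; rewrite ?h /=.
- by rewrite orbT.
- by rewrite !orbT.
have e : i = j by apply: val_inj.
subst j; rewrite eqxx /=.
case: (ltngtP (nat_of_ord x) (nat_of_ord y)) => [h'|h'|h']; rewrite ?orbT //.
have exy : x = y by apply: val_inj.
by rewrite exy eqxx.
Qed.

Lemma path_tle_tlt x s : path tle x s -> uniq (x :: s) -> path (@tlt r k) x s.
Proof.
elim: s x => //= y s IH x /andP[hxy hp] /andP[nx u]; apply/andP; split.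
  move: hxy; rewrite /tle => /orP[/eqP e|//].
  by move: nx; rewrite e inE eqxx.
exact: IH.
Qed.

End Top.

Lemma coord_ord (R : realType) n (x : 'rV[R]_n) (l : 'I_n) : coord x l = x 0 l.
Proof. by rewrite /coord valK. Qed.

Theorem lemma3p10 (R : realType) (p q r : nat) (k : 'I_r -> nat)
    (Z : {i : 'I_r & 'I_(k i)} -> 'rV[R]_(p + q)) :
  (1 <= q)%N -> (forall i, 1 <= k i)%N -> in_Vtilde Z ->
  exists Q : seq (seq {i : 'I_r & 'I_(k i)}),
    [/\ max_witnessed Z Q,
        (forall Q', max_witnessed Z Q' -> Q' = Q) &
        (q = 1%N -> forall Sg : (forall i : 'I_r, {perm 'I_(k i)}),
            in_component Z Sg -> Sigma_of_eq Q Sg)].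
Proof.
move=> hq hk [Zinj Zrow].
pose zeta := fun x => pr_zeta (Z x).
pose tt := fun x => pr_t (Z x).
have zt_inj : forall x y, zeta x = zeta y -> tt x = tt y -> x = y.
  move=> x y h1 h2; apply: Zinj; apply/rowP => l.
  rewrite -!coord_ord.
  case: (ltnP l (p + q).-1) => hl.
    have := congr1 (fun v : 'rV[R]_((p + q).-1) => v 0 (Ordinal hl)) h1; by rewrite /= !mxE.
  have e : nat_of_ord l = (p + q).-1.
    have := ltn_ord l; move: hl; rewrite -subn1; lia.
  by rewrite e.
pose S := sort (@tle r k) (enum {: {i : 'I_r & 'I_(k i)}}).
have pS : perm_eq S (enum {: {i : 'I_r & 'I_(k i)}}) by rewrite /S perm_sort.
have sS : sorted (@tlt r k) S.
  have : sorted (@tle r k) S by apply: sort_sorted; exact: tle_total.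
  have : uniq S by rewrite (perm_uniq pS) enum_uniq.
  clearbody S; case: S pS => //= a s _ u hs; exact: path_tle_tlt.
have szS : (size S <= size S)%N by [].
pose G := greedy zeta tt (size S) S.
have [[hp hne hmin hs] hw] := greedy_rp (@tlt_irr r k) (@tlt_tr r k) zt_inj szS sS.
have rpE : forall Q, is_ray_partition Q <-> is_rp (@tlt r k) S Q.
  move=> Q; split => -[h1 h2 h3 h4]; split => //.
    by apply: (perm_trans h1); rewrite perm_sym.
  exact: (perm_trans h1).
have pos : forall Q, is_rp (@tlt r k) S Q -> all (fun n => 0 < n)%N (map size Q).
  move=> Q [_ h _ _]; rewrite all_map; apply: sub_all h => s /=.
  by rewrite lt0n size_eq0.
have maxG : forall Q, is_ray_partition Q -> witnessed Z Q ->
    weight_le k (weight Q) (weight G).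
  move=> Q /rpE hQ wQ; rewrite /weight_le.
  exact: ((greedy_max (@tlt_irr r k) (@tlt_tr r k) zt_inj szS sS hQ wQ).1 _).
exists G; split.
- split => //; first by apply/rpE.
- move=> Q' [rQ wQ mQ].
  have h1 := maxG Q' rQ wQ.
  have h2 := mQ G (proj2 (rpE G) (And4 hp hne hmin hs)) hw.
  have e := lex_anti h1 h2.
  have /rpE rQ' := rQ.
  have ew := pad_inj (pos _ rQ') (pos _ (And4 hp hne hmin hs)) e.
  exact: ((greedy_max (@tlt_irr r k) (@tlt_tr r k) zt_inj szS sS rQ' wQ).2 ew).
move=> q1 Sg hc i j j' hjj; rewrite /stacked_lt.
apply: (greedy_stack (@tlt_irr r k) (@tlt_tr r k) zt_inj szS sS).
- by rewrite (perm_mem pS) mem_enum.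
- by rewrite (perm_mem pS) mem_enum.
- subst q; rewrite /zeta; apply/rowP => l; rewrite !mxE.
  have hl : (l < p)%N by have := ltn_ord l; lia.
  have := congr1 (fun v : 'rV[R]_p => v 0 (Ordinal hl)) (Zrow i (Sg i j) (Sg i j')).
  by rewrite /= !mxE.
- exact: hc.
Qed.
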